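(* Fix a metric space $M$ and a point $s\in M$, and consider algorithms with all servers starting at $s$. Suppose there is a constant $\rho$ such that for every $h\in\mathbb{N}$ there exists $k=k(h)$ for which the $(h,k)$-server problem on $M$ (all online and offline servers starting at $s$) admits a strictly $\rho$-competitive online algorithm. Then there exists a strictly $\rho$-competitive online algorithm for the infinite server problem on $(M,s)$.
   Context: Infinite server problem on $(M,s)$: $M$ is a metric space with metric $d$ and $s\in M$ is the source. An unbounded number of servers initially reside at $s$. A finite sequence of requests (points of $M$) is revealed one by one; each must be served immediately, without knowledge of future requests, by moving some server to the requested point. The cost is the total distance traveled by the servers. The $(h,k)$-server problem on $M$ ($k\ge h$) is defined similarly except that the online algorithm has $k$ servers and is compared against an optimal offline algorithm with $h$ servers. All online algorithms are deterministic. An online algorithm $ALG$ is strictly $\rho$-competitive if $ALG(\sigma)\le \rho\, OPT(\sigma)$ for every request sequence $\sigma$, where $OPT(\sigma)$ is the optimal offline cost (with $h$ servers in the $(h,k)$ case, with unboundedly many servers in the infinite server case). *)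

(* Defs.v *)
From mathcomp Require Import all_boot all_order all_algebra.
From mathcomp Require Import classical_sets reals.
Set Implicit Arguments. Unset Strict Implicit. Unset Printing Implicit Defensive.
Import Order.TTheory GRing.Theory Num.Theory.
Local Open Scope ring_scope.
Local Open Scope classical_set_scope.

Section Servers.
Variables (R : realType) (T : Type) (d : T -> T -> R) (s : T).

Definition is_metric : Prop :=
  [/\ forall x y, 0 <= d x y,
      forall x y, d x y = 0 <-> x = y,
      forall x y, d x y = d y x &
      forall x y z, d x z <= d x y + d y z].

(* A configuration is a finite list L; server i (i : nat) is at [nth s L i].
   Servers beyond [size L] are at the source s.  A server bound
   [Some k] means only servers 0..k-1 exist; [None] means unboundedly
   many servers (infinite server problem). *)
Definition server_ok (kb : option nat) (i : nat) : bool :=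
  if kb is Some k then (i < k)%N else true.

Definition config_ok (kb : option nat) (L : seq T) : bool :=
  if kb is Some k then (size L <= k)%N else true.

Definition serves (kb : option nat) (L : seq T) (r : T) : Prop :=
  exists i, server_ok kb i /\ nth s L i = r.

Definition move_cost (L L' : seq T) : R :=
  \sum_(i < maxn (size L) (size L')) d (nth s L i) (nth s L' i).

Definition path_cost (cfg : nat -> seq T) (n : nat) : R :=
  \sum_(j < n) move_cost (cfg j) (cfg j.+1).

(* Deterministic online algorithm: maps the requests revealed so far
   (including the current one) to the configuration after serving them. *)
Definition online_alg := seq T -> seq T.

Definition online_valid (kb : option nat) (alg : online_alg) : Prop :=
  forall (sigma : seq T) (r : T),
    config_ok kb (alg (rcons sigma r)) /\ serves kb (alg (rcons sigma r)) r.

Definition alg_cfg (alg : online_alg) (sigma : seq T) (j : nat) : seq T :=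
  if j is 0 then [::] else alg (take j sigma).

Definition alg_cost (alg : online_alg) (sigma : seq T) : R :=
  path_cost (alg_cfg alg sigma) (size sigma).

(* Offline schedule: S`_j is the configuration after serving request j. *)
Definition sched_cfg (S : seq (seq T)) (j : nat) : seq T :=
  if j is j'.+1 then nth [::] S j' else [::].

Definition offline_valid (hb : option nat) (sigma : seq T) (S : seq (seq T)) : Prop :=
  size S = size sigma /\
  forall j, (j < size sigma)%N ->
    config_ok hb (nth [::] S j) /\ serves hb (nth [::] S j) (nth s sigma j).

Definition opt (hb : option nat) (sigma : seq T) : R :=
  inf [set c | exists S, offline_valid hb sigma S /\
                          c = path_cost (sched_cfg S) (size sigma)].

Definition strictly_competitive (kb hb : option nat) (rho : R) (alg : online_alg) : Prop :=
  online_valid kb alg /\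
  forall sigma : seq T, alg_cost alg sigma <= rho * opt hb sigma.

End Servers.

(* Main.v *)
Require Import Defs.
From mathcomp Require Import all_boot all_order all_algebra.
From mathcomp Require Import classical_sets reals.
From mathcomp Require Import boolp zify.
Import Order.TTheory GRing.Theory Num.Theory.
Local Open Scope ring_scope.
Set Implicit Arguments. Unset Strict Implicit. Unset Printing Implicit Defensive.

Section Gen.
Variables (R : realType) (T : Type) (d : T -> T -> R) (s : T).
Hypothesis dm : is_metric d.

Lemma d0 x : d x x = 0. Proof. by case: dm => _ H _ _; apply/H. Qed.
Lemma dge0 x y : 0 <= d x y. Proof. by case: dm. Qed.
Lemma dtri x y z : d x z <= d x y + d y z. Proof. by case: dm. Qed.

Fixpoint pos (lab : seq nat) (sg : seq T) (j : nat) (l : nat) : T :=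
  if j is j'.+1 then (if nth 0%N lab j' == l then nth s sg j' else pos lab sg j' l) else s.

Lemma pos_big lab sg j l : (forall t, (t < j)%N -> (nth 0%N lab t <= t)%N) ->
  (j <= l)%N -> pos lab sg j l = s.
Proof.
elim: j => [//|j IH] Hl Hjl /=.
have -> : (nth 0%N lab j == l) = false.
  by apply/negbTE; apply/eqP => E; move: (Hl j (ltnSn j)); rewrite E; lia.
by apply: IH => [t Ht|]; [apply: Hl; lia| lia].
Qed.

Lemma nth_mkseq_pos lab sg j l : (forall t, (t < j)%N -> (nth 0%N lab t <= t)%N) ->
  nth s (mkseq (pos lab sg j) j) l = pos lab sg j l.
Proof.
move=> Hl; case: (ltnP l j) => H; first by rewrite nth_mkseq.
by rewrite nth_default ?size_mkseq // pos_big.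
Qed.

Lemma move_cost_pos lab sg j : (forall t, (t <= j)%N -> (nth 0%N lab t <= t)%N) ->
  move_cost d s (mkseq (pos lab sg j) j) (mkseq (pos lab sg j.+1) j.+1)
  = d (pos lab sg j (nth 0%N lab j)) (nth s sg j).
Proof.
move=> Hl.
rewrite /move_cost !size_mkseq (maxn_idPr (leqnSn j)).
have Hlj : (nth 0%N lab j < j.+1)%N by rewrite ltnS Hl.
have Hn k : (k <= j.+1)%N -> forall l, nth s (mkseq (pos lab sg k) k) l = pos lab sg k l.
  by move=> Hk l; apply: nth_mkseq_pos => t Ht; apply: Hl; lia.
under eq_bigr => i _ do rewrite Hn // Hn //.
rewrite (bigD1 (Ordinal Hlj)) //= eqxx big1 ?addr0 //.
move=> i /eqP Hi /=; have -> : (nth 0%N lab j == i) = false.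
  by apply/negbTE/eqP => E; apply: Hi; apply: val_inj; rewrite /= E.
by rewrite d0.
Qed.

Lemma pos_ext lab lab' sg sg' J : (forall t, (t < J)%N -> nth 0%N lab t = nth 0%N lab' t /\ nth s sg t = nth s sg' t) ->
  forall j l, (j <= J)%N -> pos lab sg j l = pos lab' sg' j l.
Proof.
move=> H; elim=> [//|j IH] l Hj /=.
by case: (H j Hj) => -> ->; rewrite IH //; lia.
Qed.

Lemma pos_relabel lab lab' sg J :
  (forall a b, (a < J)%N -> (b < J)%N -> (nth 0%N lab a == nth 0%N lab b) = (nth 0%N lab' a == nth 0%N lab' b)) ->
  forall j t, (j <= J)%N -> (t < J)%N -> pos lab sg j (nth 0%N lab t) = pos lab' sg j (nth 0%N lab' t).
Proof.
move=> H; elim=> [//|j IH] t Hj Ht /=.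
rewrite H //; try lia. by rewrite IH //; lia.
Qed.

Lemma move_cost_K L L' K : (size L <= K)%N -> (size L' <= K)%N ->
  move_cost d s L L' = \sum_(i < K) d (nth s L i) (nth s L' i).
Proof.
move=> H1 H2; rewrite /move_cost (big_ord_widen _ (fun i => d (nth s L i) (nth s L' i)) (_ : (maxn (size L) (size L') <= K)%N)); last by rewrite geq_max H1 H2.
rewrite big_mkcond /=; apply: eq_bigr => i _.
case: ifP => // /negbT; rewrite -leqNgt geq_max => /andP [h1 h2].
by rewrite !nth_default // d0.
Qed.

Lemma lazy_bound (C : nat -> seq T) (iss : seq nat) (sg : seq T) K n :
  (forall i, nth s (C 0%N) i = s) ->
  (forall j, (j <= n)%N -> (size (C j) <= K)%N) ->
  (forall j, (j < n)%N -> (nth 0%N iss j < K)%N /\ nth s (C j.+1) (nth 0%N iss j) = nth s sg j) ->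
  \sum_(j < n) d (pos iss sg j (nth 0%N iss j)) (nth s sg j) <=
  \sum_(j < n) move_cost d s (C j) (C j.+1).
Proof.
move=> H0 Hs Hi.
suff: forall m, (m <= n)%N ->
  \sum_(j < m) d (pos iss sg j (nth 0%N iss j)) (nth s sg j) +
  \sum_(i < K) d (pos iss sg m i) (nth s (C m) i) <=
  \sum_(j < m) move_cost d s (C j) (C j.+1).
  move=> /(_ n (leqnn n)) H; apply: le_trans H.
  by rewrite lerDl sumr_ge0 // => i _; apply: dge0.
elim=> [_|m IH Hm].
  by rewrite !big_ord0 add0r big1 // => i _ /=; rewrite H0 d0.
rewrite !big_ord_recr /=.
have {IH} IH := IH (ltnW Hm).
rewrite (move_cost_K (K:=K)); try (apply: Hs; lia).
case: (Hi m Hm) => HiK HiC.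
set X := d _ (nth s sg m).
apply: le_trans (lerD IH (lexx _)).
rewrite -!addrA lerD2l -big_split /=.
have -> : X = \sum_(i < K) (if (i : nat) == nth 0%N iss m then d (pos iss sg m i) (nth s (C m.+1) i) else 0).
  rewrite (bigD1 (Ordinal HiK)) //= eqxx big1 ?addr0 ?HiC //.
  by move=> i /eqP Hne; case: eqP => // E; case: Hne; apply: val_inj.
rewrite -big_split /=; apply: ler_sum => i _.
case: eqP => [E|NE].
  rewrite E eqxx HiC d0 addr0.
  apply: dtri.
rewrite add0r; have -> : (nth 0%N iss m == i) = false by apply/negbTE/eqP => E; apply: NE.
apply: dtri.
Qed.

End Gen.

Definition io (P : nat -> Prop) := forall N, exists n, (N <= n)%N /\ P n.

Lemma pigeon m (P : nat -> Prop) (g : nat -> nat) :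
  io (fun n => P n /\ (g n < m)%N) -> exists l, io (fun n => P n /\ g n = l).
Proof.
elim: m => [|m IH] H.
  by case: (H 0%N) => n [_ [_]].
case: (pselect (io (fun n => P n /\ g n = m))) => [Hm|Hm]; first by exists m.
apply: IH => N.
have [N0 HN0] : exists N0, forall n, (N0 <= n)%N -> ~ (P n /\ g n = m).
  apply: contrapT => C; apply: Hm => N1.
  apply: contrapT => C1; apply: C; exists N1 => n Hn [Pn gn]; apply: C1; exists n; split => //.
case: (H (maxn N N0)) => n [Hn [Pn Hg]].
exists n; split; first lia.
split => //; rewrite ltn_neqAle -ltnS Hg andbT; apply/eqP => E; apply: (HN0 n) => //; lia.
Qed.

Section Compact.
Variables (T : Type) (desc : nat -> seq T -> seq nat).
Hypothesis desc_nil : forall n, desc n [::] = [::].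
Hypothesis desc_rcons : forall n sg r, exists2 l, (l <= size sg)%N & desc n (rcons sg r) = rcons (desc n sg) l.

Lemma desc_props n sg : size (desc n sg) = size sg /\ forall t, (t < size sg)%N -> (nth 0%N (desc n sg) t <= t)%N.
Proof.
elim/last_ind: sg => [|sg r [IHs IHl]]; first by rewrite desc_nil.
case: (desc_rcons n sg r) => l Hl ->; rewrite !size_rcons IHs; split => // t Ht.
rewrite nth_rcons IHs; case: ifP => [h|/negbT h]; first by apply: IHl.
have -> : t = size sg by lia.
by rewrite eqxx.
Qed.

Definition next (sg : seq T) (acc : seq nat) : nat :=
  xget 0%N [set l | io (fun n => desc n sg = rcons acc l)].
Fixpoint Fr (rs : seq T) : seq nat :=
  if rs is r :: rs' then rcons (Fr rs') (next (rev rs) (Fr rs')) else [::].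
Definition Fd sg := Fr (rev sg).
Lemma Fd_rcons sg r : Fd (rcons sg r) = rcons (Fd sg) (next (rcons sg r) (Fd sg)).
Proof. by rewrite /Fd rev_rcons /= rev_cons revK. Qed.

Lemma Fd_io sg : io (fun n => desc n sg = Fd sg).
Proof.
elim/last_ind: sg => [|sg r IH].
  by move=> N; exists N; split => //; rewrite desc_nil.
have [l Hl] : exists l, io (fun n => desc n sg = Fd sg /\ last 0%N (desc n (rcons sg r)) = l).
  apply: (@pigeon (size sg).+1) => N.
  case: (IH N) => n [Hn E]; exists n; split => //; split => //.
  by case: (desc_rcons n sg r) => l' Hl' ->; rewrite last_rcons.
have Hx : io (fun n => desc n (rcons sg r) = rcons (Fd sg) (next (rcons sg r) (Fd sg))).
  apply: (@xgetPex _ 0%N [set l0 | io (fun n => desc n (rcons sg r) = rcons (Fd sg) l0)]).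
  exists l => N; case: (Hl N) => n [Hn [E1 E2]]; exists n; split => //.
  case: (desc_rcons n sg r) => l' _ E; rewrite E in E2 *; rewrite last_rcons in E2.
  by rewrite E1 E2.
by rewrite Fd_rcons.
Qed.

Lemma Fd_props sg : size (Fd sg) = size sg /\ forall t, (t < size sg)%N -> (nth 0%N (Fd sg) t <= t)%N.
Proof. by case: (Fd_io sg 0%N) => n [_ <-]; apply: desc_props. Qed.

Lemma Fd_take sg j : Fd (take j sg) = take j (Fd sg).
Proof.
elim/last_ind: sg j => [|sg r IH] j; first by [].
case: (leqP j (size sg)) => hj.
  rewrite Fd_rcons -!cats1 !takel_cat ?IH //.
  by case: (Fd_props sg) => -> _.
rewrite !take_oversize ?size_rcons //.
by case: (Fd_props (rcons sg r)) => -> _; rewrite size_rcons.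
Qed.

End Compact.

Local Open Scope classical_set_scope.
Section Opt.
Variables (R : realType) (T : Type) (d : T -> T -> R) (s : T).
Hypothesis dm : is_metric d.

Definition opt_set (h : option nat) (sg : seq T) :=
  [set c : R | exists S, offline_valid s h sg S /\ c = path_cost d s (sched_cfg S) (size sg)].

Lemma opt_lb h sg : lbound (opt_set h sg) 0.
Proof.
move=> c [S [_ ->]]; rewrite /path_cost sumr_ge0 // => j _.
by rewrite /move_cost sumr_ge0 // => i _; apply: dge0.
Qed.

Lemma opt_ne h sg : h <> Some 0%N -> nonempty (opt_set h sg).
Proof.
move=> Hh; exists (path_cost d s (sched_cfg [seq [:: r] | r <- sg]) (size sg)).
exists [seq [:: r] | r <- sg]; split => //; split; first by rewrite size_map.
move=> j Hj; rewrite (nth_map s) //; split.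
  by case: h Hh => // -[|m] //.
exists 0%N; split => //; by case: h Hh => // -[|m] //.
Qed.

Lemma opt_le h sg c : opt_set h sg c -> opt d s h sg <= c.
Proof. by move=> Hc; apply: ge_inf => //; exists 0; apply: opt_lb. Qed.

Lemma opt_ge h sg x : h <> Some 0%N -> lbound (opt_set h sg) x -> x <= opt d s h sg.
Proof. by move=> Hh Hx; apply: lb_le_inf => //; apply: opt_ne. Qed.

Fixpoint maxsz (S : seq (seq T)) : nat := if S is L :: S' then maxn (size L) (maxsz S') else 0%N.
Lemma maxsz_nth S j : (j < size S)%N -> (size (nth [::] S j) <= maxsz S)%N.
Proof.
elim: S j => [//|L S IH] [|j] /= Hj; first by apply: leq_maxl.
by apply: leq_trans (IH j Hj) (leq_maxr _ _).
Qed.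

Lemma none_some sg S h : offline_valid s None sg S -> (maxsz S < h)%N -> offline_valid s (Some h) sg S.
Proof.
move=> [Hsz Hv] Hh; split => // j Hj.
have Hm := maxsz_nth (j:=j) (S:=S); rewrite Hsz in Hm; have {}Hm := Hm Hj.
case: (Hv j Hj) => _ [i [_ Hi]]; split; first by rewrite /= ; lia.
case: (ltnP i (size (nth [::] S j))) => hi.
  by exists i; split => //=; lia.
exists (size (nth [::] S j)); split; first by rewrite /=; lia.
by rewrite nth_default // -Hi nth_default.
Qed.

Lemma some_none sg S h : offline_valid s (Some h) sg S -> offline_valid s None sg S.
Proof.
move=> [Hsz Hv]; split => // j Hj; case: (Hv j Hj) => _ [i [_ Hi]]; split => //.
by exists i.
Qed.

End Opt.

Definition ialg (T : Type) (s : T) (F : seq T -> seq nat) : online_alg T :=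
  fun sg => mkseq (pos s (F sg) sg (size sg)) (size sg).

Section Main.
Variables (R : realType) (T : Type) (d : T -> T -> R) (s : T) (rho : R).
Hypothesis dm : is_metric d.
Variable f : nat -> nat * online_alg T.
Hypothesis Hf : forall n, (n.+1 <= (f n).1)%N /\
   strictly_competitive d s (Some (f n).1) (Some n.+1) rho (f n).2.

Definition idx n (sg' : seq T) : nat :=
  xget 0%N [set i | (i < (f n).1)%N /\ nth s ((f n).2 sg') i = last s sg'].
Definition iseq n sg := mkseq (fun j => idx n (take j.+1 sg)) (size sg).
Definition desc n sg := [seq index x (iseq n sg) | x <- iseq n sg].

Lemma idx_spec n sg r : (idx n (rcons sg r) < (f n).1)%N /\ nth s ((f n).2 (rcons sg r)) (idx n (rcons sg r)) = r.
Proof.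
have := @xgetPex _ 0%N [set i | (i < (f n).1)%N /\ nth s ((f n).2 (rcons sg r)) i = last s (rcons sg r)].
rewrite /idx last_rcons; apply.
case: (Hf n) => _ [Hv _]; case: (Hv sg r) => _ [i [Hi E]]; by exists i.
Qed.

Lemma iseq_rcons n sg r : iseq n (rcons sg r) = rcons (iseq n sg) (idx n (rcons sg r)).
Proof.
rewrite /iseq size_rcons mkseqS take_oversize ?size_rcons //; congr rcons.
rewrite /mkseq; apply/eq_in_map => j; rewrite mem_iota add0n => /andP [_ hj].
by rewrite -cats1 takel_cat.
Qed.

Lemma desc_rcons n sg r : exists2 l, (l <= size sg)%N & desc n (rcons sg r) = rcons (desc n sg) l.
Proof.
exists (index (idx n (rcons sg r)) (rcons (iseq n sg) (idx n (rcons sg r)))).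
  have := index_mem (idx n (rcons sg r)) (rcons (iseq n sg) (idx n (rcons sg r))).
  by rewrite mem_rcons mem_head size_rcons /iseq size_mkseq ltnS => ->.
rewrite /desc iseq_rcons map_rcons; congr rcons.
by apply/eq_in_map => x hx; rewrite -cats1 index_cat hx.
Qed.

Lemma desc_nil n : desc n [::] = [::].
Proof. by []. Qed.

Lemma desc_lab n sg a b : (a < size sg)%N -> (b < size sg)%N ->
  (nth 0%N (desc n sg) a == nth 0%N (desc n sg) b) = (nth 0%N (iseq n sg) a == nth 0%N (iseq n sg) b).
Proof.
have Hs : size (iseq n sg) = size sg by rewrite size_mkseq.
move=> ha hb; rewrite /desc; move: Hs; move: (iseq n sg) => iss Hs.
rewrite !(nth_map 0%N) ?Hs //.
apply/eqP/eqP => [E|->] //.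
have ma : nth 0%N iss a \in iss by rewrite mem_nth ?Hs.
have mb : nth 0%N iss b \in iss by rewrite mem_nth ?Hs.
by rewrite -(nth_index 0%N ma) E nth_index.
Qed.

Lemma cost_bound n sg :
  \sum_(j < size sg) d (pos s (desc n sg) sg j (nth 0%N (desc n sg) j)) (nth s sg j)
  <= alg_cost d s ((f n).2) sg.
Proof.
rewrite (eq_bigr (fun j : 'I_(size sg) => d (pos s (iseq n sg) sg j (nth 0%N (iseq n sg) j)) (nth s sg j))); last first.
  move=> j _; rewrite (@pos_relabel T s (desc n sg) (iseq n sg) sg (size sg)) //.
  by move=> a b ha hb; apply: desc_lab.
  exact: ltnW.
apply: (@lazy_bound R T d s dm _ _ _ ((f n).1)).
- by move=> i; rewrite /= nth_nil.
- move=> [|j] hj //=; rewrite (take_nth s) //.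
  by case: (Hf n) => _ [Hv _]; case: (Hv (take j sg) (nth s sg j)).
- move=> j hj; rewrite /iseq nth_mkseq // /alg_cfg (take_nth s) //.
  by apply: idx_spec.
Qed.

Lemma cost_ialg (F : seq T -> seq nat) sg :
  (forall j, F (take j sg) = take j (F sg)) ->
  (forall t, (t < size sg)%N -> (nth 0%N (F sg) t <= t)%N) ->
  alg_cost d s (ialg s F) sg =
  \sum_(j < size sg) d (pos s (F sg) sg j (nth 0%N (F sg) j)) (nth s sg j).
Proof.
move=> HF Hl.
have Hc j : (j <= size sg)%N -> alg_cfg (ialg s F) sg j = mkseq (pos s (F sg) sg j) j.
  case: j => [//|j] hj /=; rewrite /ialg size_takel // HF.
  apply: eq_mkseq => l; apply: (@pos_ext T s _ _ _ _ j.+1) => // t ht.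
  by rewrite !nth_take.
rewrite /alg_cost /path_cost; apply: eq_bigr => j _.
rewrite !Hc //; last exact: ltnW.
by apply: move_cost_pos => // t ht; apply: Hl; have := ltn_ord j; lia.
Qed.

Lemma main_alg : exists alg : online_alg T, strictly_competitive d s None None rho alg.
Proof.
have Hio := @Fd_io T desc desc_nil desc_rcons.
have Hpr := @Fd_props T desc desc_nil desc_rcons.
have Htk := @Fd_take T desc desc_nil desc_rcons.
exists (ialg s (Fd desc)); split.
  move=> sg r; split => //.
  have [Hsz Hl] := Hpr (rcons sg r).
  exists (nth 0%N (Fd desc (rcons sg r)) (size sg)); split => //.
  rewrite /ialg nth_mkseq_pos.
    by rewrite size_rcons /= eqxx nth_rcons ltnn eqxx.
  by move=> t ht; apply: Hl.
move=> sg.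
rewrite (cost_ialg (Htk sg)); last by case: (Hpr sg).
set c0 := \sum_(j < _) _.
have key : forall N, exists n, (N <= n)%N /\ c0 <= rho * opt d s (Some n.+1) sg.
  move=> N; case: (Hio sg N) => n [hn E]; exists n; split => //.
  rewrite /c0 -E; apply: le_trans (cost_bound n sg) _.
  by case: (Hf n) => _ [_ ->].
case: (ltrP rho 0) => hr.
  case: (key 0%N) => n [_ h1]; apply: le_trans h1 _.
  apply: ler_wnM2l; first exact: ltW.
  apply: (@opt_ge R T d s (Some n.+1) sg) => // c [S [HS ->]]; apply: (opt_le dm); exists S; split => //.
  exact: some_none HS.
case: (eqVneq rho 0) => [E|nz].
  by case: (key 0%N) => n [_ h1]; move: h1; rewrite E !mul0r.
have rpos : 0 < rho by rewrite lt_def nz hr.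
rewrite -ler_pdivrMl //.
apply: opt_ge => // c [S [HS ->]].
case: (key (maxsz S)) => n [hn h1].
rewrite ler_pdivrMl //; apply: le_trans h1 _.
apply: ler_wpM2l; first exact: ltW.
apply: (opt_le dm); exists S; split => //.
by apply: none_some HS _; rewrite ltnS.
Qed.

End Main.

Theorem theorem2 (R : realType) (T : Type) (d : T -> T -> R) (s : T) (rho : R) :
  is_metric d ->
  (forall h : nat, (0 < h)%N ->
     exists k : nat, (h <= k)%N /\
       exists alg : online_alg T,
         strictly_competitive d s (Some k) (Some h) rho alg) ->
  exists alg : online_alg T, strictly_competitive d s None None rho alg.
Proof.
move=> dm H.
have [f Hf] := @choice nat (nat * online_alg T)%type
  (fun n p => (n.+1 <= p.1)%N /\ strictly_competitive d s (Some p.1) (Some n.+1) rho p.2)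
  (fun n => match H n.+1 erefl with ex_intro k (conj hk (ex_intro alg ha)) => ex_intro _ (k, alg) (conj hk ha) end).
exact: (main_alg dm Hf).
Qed.
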